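(* Let $T$, $\mathcal{S}=\mathcal{S}_+\cup\mathcal{S}_-$, $\Psi$, $\lambda,\mu$ and the matrices $E,F,G,H$ be as in the context, and let $K:=T_{++}+\Psi T_{-+}$. Let $\mathcal{R}_D$ be the minimal nonnegative solution of $\mathcal{R}^2D_{-1}+\mathcal{R}D_0+D_1=\mathcal{R}$, where $$D_{-1}=\begin{bmatrix}0&0\\0&F\end{bmatrix},\quad D_0=\begin{bmatrix}0&G\\H&0\end{bmatrix},\quad D_1=\begin{bmatrix}E&0\\0&0\end{bmatrix}.$$ Then $$\mathcal{R}_D=\begin{bmatrix}R_1&R_1\Psi\\0&0\end{bmatrix},\qquad\text{where}\quad R_1:=E(I-\Psi H)^{-1}=(I-\mu^{-1}K)^{-1}(I+\lambda^{-1}K).$$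
   Context: $T$ is the generator of a continuous-time Markov chain on a finite set $\mathcal{S}=\mathcal{S}_+\cup\mathcal{S}_-$ (disjoint, both nonempty), partitioned into blocks $T_{++},T_{+-},T_{-+},T_{--}$ according to $\mathcal{S}_\pm$. $\Psi$ is the minimal nonnegative solution of $T_{+-}+\Psi T_{--}+T_{++}\Psi+\Psi T_{-+}\Psi=0$ (the first-return probability matrix of the unit-rate fluid queue with phase generator $T$, rates $+1$ on $\mathcal{S}_+$ and $-1$ on $\mathcal{S}_-$). $\lambda,\mu>0$ satisfy $\lambda,\mu\ge\max_i|T_{ii}|$. The matrices $E$ ($|\mathcal{S}_+|\times|\mathcal{S}_+|$), $G$ ($|\mathcal{S}_+|\times|\mathcal{S}_-|$), $H$ ($|\mathcal{S}_-|\times|\mathcal{S}_+|$), $F$ ($|\mathcal{S}_-|\times|\mathcal{S}_-|$) are defined by $\begin{bmatrix}E&G\\H&F\end{bmatrix}=\begin{bmatrix}I-\mu^{-1}T_{++}&-\lambda^{-1}T_{+-}\\-\mu^{-1}T_{-+}&I-\lambda^{-1}T_{--}\end{bmatrix}^{-1}\begin{bmatrix}I+\lambda^{-1}T_{++}&\mu^{-1}T_{+-}\\\lambda^{-1}T_{-+}&I+\mu^{-1}T_{--}\end{bmatrix}$. $D_{-1},D_0,D_1$ are the transition blocks of a quasi-birth-death process (levels in $\mathbb{Z}+1/2$, phases in $\mathcal{S}$), and $\mathcal{R}_D$ is its $\mathcal{R}$-matrix (expected numbers of visits to the next level up before returning to the starting level). *)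

(* Defs.v *)
From HB Require Import structures.
From mathcomp Require Import all_boot all_order all_algebra.
From mathcomp Require Import reals.
Set Implicit Arguments. Unset Strict Implicit. Unset Printing Implicit Defensive.
Import Order.TTheory GRing.Theory Num.Theory.
Local Open Scope ring_scope.

Section Defs.
Variable R : realType.

Definition nonneg_mx m n (A : 'M[R]_(m, n)) : Prop := forall i j, 0 <= A i j.
Definition le_mx m n (A B : 'M[R]_(m, n)) : Prop := forall i j, A i j <= B i j.

Definition min_nonneg_sol m n (P : 'M[R]_(m, n) -> Prop) (X : 'M[R]_(m, n)) : Prop :=
  [/\ nonneg_mx X, P X & forall Y, nonneg_mx Y -> P Y -> le_mx X Y].

Definition generator n (T : 'M[R]_n) : Prop :=
  (forall i j, i != j -> 0 <= T i j) /\ (forall i, \sum_j T i j = 0).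

Variables (p q : nat).
Implicit Types (T : 'M[R]_(p + q)).

(* blocks of T w.r.t. S = S_+ (first p states) u S_- (last q states) *)
Definition Tpp T : 'M[R]_p := ulsubmx T.
Definition Tpm T : 'M[R]_(p, q) := ursubmx T.
Definition Tmp T : 'M[R]_(q, p) := dlsubmx T.
Definition Tmm T : 'M[R]_q := drsubmx T.

Definition psi_eq T (Psi : 'M[R]_(p, q)) : Prop :=
  Tpm T + Psi *m Tmm T + Tpp T *m Psi + Psi *m Tmp T *m Psi = 0.

Definition EGHF T (lam mu : R) : 'M[R]_(p + q) :=
  invmx (block_mx (1%:M - mu^-1 *: Tpp T) (- (lam^-1 *: Tpm T))
                  (- (mu^-1 *: Tmp T)) (1%:M - lam^-1 *: Tmm T))
  *m block_mx (1%:M + lam^-1 *: Tpp T) (mu^-1 *: Tpm T)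
              (lam^-1 *: Tmp T) (1%:M + mu^-1 *: Tmm T).

Definition Emx T lam mu : 'M[R]_p := ulsubmx (EGHF T lam mu).
Definition Gmx T lam mu : 'M[R]_(p, q) := ursubmx (EGHF T lam mu).
Definition Hmx T lam mu : 'M[R]_(q, p) := dlsubmx (EGHF T lam mu).
Definition Fmx T lam mu : 'M[R]_q := drsubmx (EGHF T lam mu).

Definition Dm1 T lam mu : 'M[R]_(p + q) := block_mx 0 0 0 (Fmx T lam mu).
Definition D0 T lam mu : 'M[R]_(p + q) := block_mx 0 (Gmx T lam mu) (Hmx T lam mu) 0.
Definition D1 T lam mu : 'M[R]_(p + q) := block_mx (Emx T lam mu) 0 0 0.

Definition RD_eq T lam mu (X : 'M[R]_(p + q)) : Prop :=
  X *m X *m Dm1 T lam mu + X *m D0 T lam mu + D1 T lam mu = X.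

End Defs.

(* Main.v *)
Require Import Defs.
From HB Require Import structures.
From mathcomp Require Import all_boot all_order all_algebra.
From mathcomp Require Import reals.
From mathcomp Require Import classical_sets boolp topology normedtype sequences.
Import Order.TTheory GRing.Theory Num.Theory.
Import numFieldNormedType.Exports.
Local Open Scope classical_set_scope.
Local Open Scope ring_scope.

Set Implicit Arguments. Unset Strict Implicit. Unset Printing Implicit Defensive.
Section Lim.
Variable R : realType.

Definition cvgmx m n (u : nat -> 'M[R]_(m, n)) (L : 'M[R]_(m, n)) : Prop :=
  forall i j, (fun k => u k i j) @ \oo --> L i j.

Lemma cvg_sumR (I : finType) (f : I -> nat -> R) (a : I -> R) :
  (forall i, f i @ \oo --> a i) -> (fun k => \sum_i f i k) @ \oo --> \sum_i a i.
Proof.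
move=> h; apply: cvg_big => //; exact: add_continuous.
Qed.

Lemma cvgmx_cst m n (A : 'M[R]_(m, n)) : cvgmx (fun _ => A) A.
Proof. by move=> i j; exact: cvg_cst. Qed.

Lemma cvgmx_add m n (u v : nat -> 'M[R]_(m, n)) a b :
  cvgmx u a -> cvgmx v b -> cvgmx (fun k => u k + v k) (a + b).
Proof.
move=> hu hv i j; rewrite mxE.
have -> : (fun k => (u k + v k) i j) = (fun k => u k i j + v k i j).
  by apply: funext => k; rewrite !mxE.
exact: (cvgD (hu i j) (hv i j)).
Qed.

Lemma cvgmx_scale m n (u : nat -> 'M[R]_(m, n)) a c :
  cvgmx u a -> cvgmx (fun k => c *: u k) (c *: a).
Proof.
move=> hu i j; rewrite mxE.
have -> : (fun k => (c *: u k) i j) = (fun k => c * u k i j).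
  by apply: funext => k; rewrite !mxE.
apply: cvgMl_tmp; exact: hu.
Qed.

Lemma cvgmx_mul m n r (u : nat -> 'M[R]_(m, n)) (v : nat -> 'M[R]_(n, r)) a b :
  cvgmx u a -> cvgmx v b -> cvgmx (fun k => u k *m v k) (a *m b).
Proof.
move=> hu hv i j; rewrite mxE.
have -> : (fun k => (u k *m v k) i j) = (fun k => \sum_l u k i l * v k l j).
  by apply: funext => k; rewrite !mxE.
apply: cvg_sumR => l.
exact: (cvgM (hu i l) (hv l j)).
Qed.
End Lim.
Arguments cvgmx_cst {R m n} A.

Section Ord.
Variable R : realType.
Implicit Types m n r : nat.

Lemma le_mx_refl m n (A : 'M[R]_(m, n)) : le_mx A A.
Proof. by move=> i j. Qed.

Lemma le_mx_trans m n (A B C : 'M[R]_(m, n)) : le_mx A B -> le_mx B C -> le_mx A C.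
Proof. by move=> h1 h2 i j; exact: le_trans (h1 i j) (h2 i j). Qed.

Lemma le_mx_anti m n (A B : 'M[R]_(m, n)) : le_mx A B -> le_mx B A -> A = B.
Proof. by move=> h1 h2; apply/matrixP => i j; apply/eqP; rewrite eq_le h1 h2. Qed.

Lemma nn_le0 m n (A : 'M[R]_(m, n)) : nonneg_mx A <-> le_mx 0 A.
Proof. by split=> h i j; move: (h i j); rewrite mxE. Qed.

Lemma nn0 m n : nonneg_mx (0 : 'M[R]_(m, n)).
Proof. by move=> i j; rewrite mxE. Qed.

Lemma nn_add m n (A B : 'M[R]_(m, n)) : nonneg_mx A -> nonneg_mx B -> nonneg_mx (A + B).
Proof. by move=> h1 h2 i j; rewrite mxE addr_ge0. Qed.

Lemma nn_mul m n r (A : 'M[R]_(m, n)) (B : 'M[R]_(n, r)) :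
  nonneg_mx A -> nonneg_mx B -> nonneg_mx (A *m B).
Proof. by move=> h1 h2 i j; rewrite mxE sumr_ge0 // => k _; rewrite mulr_ge0. Qed.

Lemma nn_scale m n c (A : 'M[R]_(m, n)) : 0 <= c -> nonneg_mx A -> nonneg_mx (c *: A).
Proof. by move=> hc h i j; rewrite mxE mulr_ge0. Qed.

Lemma le_mx_add m n (A A' B B' : 'M[R]_(m, n)) : le_mx A A' -> le_mx B B' -> le_mx (A + B) (A' + B').
Proof. by move=> h1 h2 i j; rewrite !mxE lerD. Qed.

Lemma le_mx_mul m n r (A A' : 'M[R]_(m, n)) (B B' : 'M[R]_(n, r)) :
  nonneg_mx A -> le_mx A A' -> nonneg_mx B -> le_mx B B' -> le_mx (A *m B) (A' *m B').
Proof.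
move=> hA hAA hB hBB i j; rewrite !mxE; apply: ler_sum => k _.
by apply: ler_pM.
Qed.

Lemma le_mx_mulr m n r (A A' : 'M[R]_(m, n)) (B : 'M[R]_(n, r)) :
  le_mx A A' -> nonneg_mx B -> le_mx (A *m B) (A' *m B).
Proof.
move=> hAA hB i j; rewrite !mxE; apply: ler_sum => k _.
by apply: ler_wpM2r.
Qed.

Lemma le_mx_mull m n r (A : 'M[R]_(m, n)) (B B' : 'M[R]_(n, r)) :
  nonneg_mx A -> le_mx B B' -> le_mx (A *m B) (A *m B').
Proof.
move=> hA hBB i j; rewrite !mxE; apply: ler_sum => k _.
by apply: ler_wpM2l.
Qed.

Lemma le_mx_sub m n (A B : 'M[R]_(m, n)) : le_mx A B <-> nonneg_mx (B - A).
Proof. by split=> h i j; move: (h i j); rewrite ?mxE subr_ge0. Qed.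

Lemma nn_le_trans m n (A B : 'M[R]_(m, n)) : nonneg_mx A -> le_mx A B -> nonneg_mx B.
Proof. by move=> h1 h2 i j; exact: le_trans (h1 i j) (h2 i j). Qed.
End Ord.

Section Iter.
Variable R : realType.

Lemma iter_fix m n (F : 'M[R]_(m,n) -> 'M[R]_(m,n)) (X : 'M[R]_(m,n)) :
  (forall Y Z, nonneg_mx Y -> le_mx Y Z -> le_mx (F Y) (F Z)) ->
  nonneg_mx (F 0) -> nonneg_mx X -> F X = X ->
  (forall u L, cvgmx u L -> cvgmx (fun k => F (u k)) (F L)) ->
  exists L, [/\ F L = L, nonneg_mx L, le_mx L X & cvgmx (fun k => iter k F 0) L].
Proof.
move=> Fmono F0 X0 FX Fcont.
pose u k := iter k F 0.
have h1 : forall k, [/\ nonneg_mx (u k), le_mx (u k) (u k.+1) & le_mx (u k) X].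
  elim=> [|k [h1 h2 h3]].
    split; rewrite /u /=; [exact: nn0| |]; apply/nn_le0 => //.
  have nk1 : nonneg_mx (u k.+1).
    apply: nn_le_trans F0 _; rewrite /u /=; apply: Fmono; [exact: nn0|].
    by apply/nn_le0.
  split => //; rewrite /u /=.
    by apply: Fmono.
  by rewrite -FX; apply: Fmono.
pose L := \matrix_(i, j) sup (range (fun k => u k i j)).
have cvL : cvgmx u L.
  move=> i j; rewrite mxE; apply: nondecreasing_cvgn.
    by apply/nondecreasing_seqP => k; case: (h1 k) => _ h _; exact: h.
  exists (X i j) => _ [k _ <-]; by case: (h1 k) => _ _ h.
exists L; split => //.
- apply/matrixP => i j.
  have A1 := Fcont u L cvL i j.
  have A2 : (fun k => F (u k) i j) @ \oo --> L i j.
    by have := cvL i j; rewrite -cvg_shiftS.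
  exact: (cvg_unique _ A1 A2).
- move=> i j; apply: (ler_cvg_to (cvg_cst 0) (cvL i j)); apply: nearW => k.
  by case: (h1 k) => h _ _; exact: h.
- move=> i j; apply: (ler_cvg_to (cvL i j) (cvg_cst (X i j))); apply: nearW => k.
  by case: (h1 k) => _ _ h; exact: h.
Qed.
End Iter.

Section MinPrin.
Variable R : realType.

Lemma minprin n (Z : 'M[R]_n) (w : 'cV[R]_n) :
  (forall i j, i != j -> Z i j <= 0) -> (forall i, 0 < w i 0) ->
  (forall i, 0 < (Z *m w) i 0) ->
  forall k (X : 'M[R]_(n, k)), nonneg_mx (Z *m X) -> nonneg_mx X.
Proof.
move=> Zoff wpos Zw k X hZX i0 c.
rewrite leNgt; apply/negP => hneg.
pose f := fun i => X i c / w i 0.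
case: (@arg_minP _ _ _ i0 xpredT f isT) => i _ himin.
set t := f i.
have tneg : t < 0.
  apply: le_lt_trans (himin i0 isT) _.
  by rewrite /f pmulr_llt0 // invr_gt0.
have hj : forall j, t * w j 0 <= X j c.
  move=> j; have := himin j isT; rewrite /f -/t => h.
  by rewrite -(ler_pdivlMr _ _ (wpos j)).
have hi : X i c = t * w i 0.
  by rewrite /t /f divfK // gt_eqF.
have : (Z *m X) i c <= t * (Z *m w) i 0.
  rewrite !mxE mulr_sumr; apply: ler_sum => j _.
  case: (eqVneq i j) => [<-|hij].
    by rewrite hi mulrCA.
  rewrite mulrCA; apply: ler_wnM2l; first exact: Zoff.
  exact: hj.
rewrite leNgt => /negP; apply.
apply: lt_le_trans (hZX i c).
by rewrite pmulr_llt0 // nmulr_rlt0.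
Qed.
End MinPrin.

Section MinPrin2.
Variable R : realType.

Lemma minprin_unit n (Z : 'M[R]_n) (w : 'cV[R]_n) :
  (forall i j, i != j -> Z i j <= 0) -> (forall i, 0 < w i 0) ->
  (forall i, 0 < (Z *m w) i 0) -> Z \in unitmx.
Proof.
move=> h1 h2 h3.
rewrite unitmxE -det_tr unitfE; apply/negP => /det0P [v vn0 hv].
have hZ : Z *m v^T = 0 by rewrite -[Z]trmxK -trmx_mul hv trmx0.
have a1 : nonneg_mx v^T by apply: (minprin h1 h2 h3); rewrite hZ; exact: nn0.
have a2 : nonneg_mx (- v^T).
  by apply: (minprin h1 h2 h3); rewrite mulmxN hZ oppr0; exact: nn0.
move/eqP: vn0; apply; apply/matrixP => i j.
have := a1 j i; have := a2 j i; rewrite !mxE oppr_ge0 => b1 b2.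
by apply/eqP; rewrite eq_le b1 b2.
Qed.

Lemma minprin_inv n (Z : 'M[R]_n) (w : 'cV[R]_n) :
  (forall i j, i != j -> Z i j <= 0) -> (forall i, 0 < w i 0) ->
  (forall i, 0 < (Z *m w) i 0) -> nonneg_mx (invmx Z).
Proof.
move=> h1 h2 h3; apply: (minprin h1 h2 h3).
rewrite mulmxV; last exact: (minprin_unit h1 h2 h3).
by move=> i j; rewrite mxE ler0n.
Qed.
End MinPrin2.

Section Unit2.
Variable R : realType.

Lemma negpart_nn n (P : 'M[R]_n) (x : 'cV[R]_n) :
  nonneg_mx P -> P *m x = x ->
  (forall y : 'cV[R]_n, nonneg_mx y -> le_mx y (P *m y) -> y = 0) -> nonneg_mx x.
Proof.
move=> hP hx hy.
pose y : 'cV[R]_n := \matrix_(i, j) Num.max (- x i j) 0.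
have ynn : nonneg_mx y by move=> i j; rewrite mxE le_max lexx orbT.
have hle : le_mx y (P *m y).
  move=> i j; rewrite [y i j]mxE ge_max; apply/andP; split; last first.
    exact: (nn_mul hP ynn).
  rewrite -{1}hx !mxE -sumrN; apply: ler_sum => k _.
  rewrite -mulrN; apply: ler_wpM2l; first exact: hP.
  by rewrite mxE le_max lexx.
have y0 := hy y ynn hle.
move=> i j; have := congr1 (fun M : 'cV[R]_n => M i j) y0; rewrite !mxE.
move=> h; have : - x i j <= 0 by rewrite -h le_max lexx.
by rewrite oppr_le0.
Qed.

Lemma unit_L7 n (P : 'M[R]_n) :
  nonneg_mx P ->
  (forall y : 'cV[R]_n, nonneg_mx y -> le_mx y (P *m y) -> y = 0) ->
  (1%:M - P) \in unitmx.
Proof.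
move=> hP hy.
rewrite unitmxE -det_tr unitfE; apply/negP => /det0P [v vn0 hv].
have hZ : (1%:M - P) *m v^T = 0 by rewrite -[_ - P]trmxK -trmx_mul hv trmx0.
have hx : P *m v^T = v^T.
  by apply/eqP; rewrite eq_sym -subr_eq0 -[X in X - _]mul1mx -mulmxBl hZ.
have a1 := negpart_nn hP hx hy.
have hx' : P *m (- v^T) = - v^T by rewrite mulmxN hx.
have a2 := negpart_nn hP hx' hy.
move/eqP: vn0; apply; apply/matrixP => i j.
have := a1 j i; have := a2 j i; rewrite !mxE oppr_ge0 => b1 b2.
by apply/eqP; rewrite eq_le b1 b2.
Qed.
End Unit2.

Section Blk.
Variable R : realType.
Lemma split_indg m1 m2 (P : 'I_(m1 + m2) -> Prop) :
  (forall i, P (lshift m2 i)) -> (forall i, P (rshift m1 i)) -> forall i, P i.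
Proof. by move=> hl hr i; rewrite -(splitK i); case: split => k /=. Qed.

Lemma nn_block m1 m2 n1 n2 (A : 'M[R]_(m1, n1)) (B : 'M[R]_(m1, n2))
  (C : 'M[R]_(m2, n1)) (D : 'M[R]_(m2, n2)) :
  nonneg_mx A -> nonneg_mx B -> nonneg_mx C -> nonneg_mx D ->
  nonneg_mx (block_mx A B C D).
Proof.
move=> hA hB hC hD; apply: split_indg => i; apply: split_indg => j.
- by rewrite block_mxEul.
- by rewrite block_mxEur.
- by rewrite block_mxEdl.
- by rewrite block_mxEdr.
Qed.
End Blk.

Section Main.
Variables (R : realType) (p q : nat) (T : 'M[R]_(p + q)) (lam mu : R).
Hypotheses (hgen : generator T) (hlam : 0 < lam) (hmu : 0 < mu)
  (hdl : forall i, `|T i i| <= lam) (hdm : forall i, `|T i i| <= mu).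

Local Notation a := (Tpp T).
Local Notation b := (Tpm T).
Local Notation c := (Tmp T).
Local Notation d := (Tmm T).
Local Notation l := (lam^-1).
Local Notation m := (mu^-1).
Local Notation "'1_ k" := (const_mx 1 : 'cV[R]_k) (at level 8, k at level 2).

Lemma split_ind (P : 'I_(p + q) -> Prop) :
  (forall i, P (lshift q i)) -> (forall i, P (rshift p i)) -> forall i, P i.
Proof. by move=> hl hr i; rewrite -(splitK i); case: split => k /=. Qed.

Lemma TE : T = block_mx a b c d.
Proof. by rewrite submxK. Qed.

Lemma Toff i j : i != j -> 0 <= T i j.
Proof. by case: hgen => h _; exact: h. Qed.

Lemma b_nn : nonneg_mx b.
Proof. by move=> i j; rewrite !mxE; apply: Toff; rewrite eq_lrshift. Qed.

Lemma c_nn : nonneg_mx c.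
Proof. by move=> i j; rewrite !mxE; apply: Toff; rewrite eq_rlshift. Qed.

Lemma a_off i j : i != j -> 0 <= a i j.
Proof. by move=> hij; rewrite !mxE; apply: Toff; rewrite (inj_eq (@lshift_inj _ _)). Qed.

Lemma d_off i j : i != j -> 0 <= d i j.
Proof. by move=> hij; rewrite !mxE; apply: Toff; rewrite (inj_eq (@rshift_inj _ _)). Qed.

Lemma l_gt0 : 0 < l. Proof. by rewrite invr_gt0. Qed.
Lemma m_gt0 : 0 < m. Proof. by rewrite invr_gt0. Qed.

Lemma diag_l i : -1 <= l * T i i.
Proof.
have := hdl i; rewrite ler_norml => /andP [h _].
by rewrite -(mulVf (lt0r_neq0 hlam)) -mulrN ler_pM2l // l_gt0.
Qed.

Lemma diag_m i : -1 <= m * T i i.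
Proof.
have := hdm i; rewrite ler_norml => /andP [h _].
by rewrite -(mulVf (lt0r_neq0 hmu)) -mulrN ler_pM2l // m_gt0.
Qed.

Lemma Trow : T *m '1_(p + q) = 0.
Proof.
case: hgen => _ h; apply/matrixP => i j; rewrite !mxE -[RHS](h i).
by apply: eq_bigr => k _; rewrite mxE mulr1.
Qed.

Lemma one_split : '1_(p + q) = col_mx '1_p '1_q.
Proof.
apply/matrixP => i j; rewrite -(splitK i); case: split => k /=.
  by rewrite col_mxEu !mxE.
by rewrite col_mxEd !mxE.
Qed.

Lemma row_p : a *m '1_p + b *m '1_q = 0.
Proof.
have := Trow; rewrite {1}TE one_split mul_block_col.
by move/(congr1 usubmx); rewrite col_mxKu linear0.
Qed.

Lemma row_q : c *m '1_p + d *m '1_q = 0.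
Proof.
have := Trow; rewrite {1}TE one_split mul_block_col.
by move/(congr1 dsubmx); rewrite col_mxKd linear0.
Qed.

Definition Mx := block_mx (1%:M - m *: a) (- (l *: b)) (- (m *: c)) (1%:M - l *: d).
Definition Nx := block_mx (1%:M + l *: a) (m *: b) (l *: c) (1%:M + m *: d).

Lemma EGHF_E : EGHF T lam mu = invmx Mx *m Nx.
Proof. by []. Qed.

Lemma lsh_neq (i j : 'I_p) : (lshift q i != lshift q j) = (i != j).
Proof. by rewrite (inj_eq (@lshift_inj _ _)). Qed.
Lemma rsh_neq (i j : 'I_q) : (rshift p i != rshift p j) = (i != j).
Proof. by rewrite (inj_eq (@rshift_inj _ _)). Qed.

Lemma aE (i j : 'I_p) : a i j = T (lshift q i) (lshift q j).
Proof. by rewrite !mxE. Qed.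
Lemma dE (i j : 'I_q) : d i j = T (rshift p i) (rshift p j).
Proof. by rewrite !mxE. Qed.

Lemma Mx_off i j : i != j -> Mx i j <= 0.
Proof.
move: i j; apply: split_ind => i; apply: split_ind => j.
- rewrite lsh_neq /Mx block_mxEul => hij; rewrite !mxE (negbTE hij) sub0r oppr_le0.
  by rewrite mulr_ge0 ?(ltW m_gt0) // -aE a_off.
- move=> _; have hb := b_nn i j; rewrite /Mx block_mxEur !mxE in hb *.
  by rewrite oppr_le0 mulr_ge0 ?(ltW l_gt0).
- move=> _; have hc := c_nn i j; rewrite /Mx block_mxEdl !mxE in hc *.
  by rewrite oppr_le0 mulr_ge0 ?(ltW m_gt0).
- rewrite rsh_neq /Mx block_mxEdr => hij; rewrite !mxE (negbTE hij) sub0r oppr_le0.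
  by rewrite mulr_ge0 ?(ltW l_gt0) // -dE d_off.
Qed.

Definition wM := col_mx (mu *: '1_p) (lam *: '1_q).

Lemma wM_pos i : 0 < wM i 0.
Proof.
move: i; apply: split_ind => i; rewrite /wM ?col_mxEu ?col_mxEd !mxE mulr1 //.
Qed.

Lemma Mx_w : Mx *m wM = wM.
Proof.
rewrite /Mx /wM mul_block_col; congr col_mx.
- rewrite mulmxBl mul1mx mulNmx -!scalemxAl !scalemxAr !scalerA !mulVf ?lt0r_neq0 //.
  by rewrite !scale1r -addrA -opprD row_p oppr0 addr0.
- rewrite mulmxBl mul1mx mulNmx -!scalemxAl !scalemxAr !scalerA !mulVf ?lt0r_neq0 //.
  by rewrite !scale1r addrCA -opprD row_q oppr0 addr0.
Qed.

Lemma Mx_unit : Mx \in unitmx.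
Proof.
apply: (minprin_unit Mx_off wM_pos); rewrite Mx_w; exact: wM_pos.
Qed.

Lemma invMx_nn : nonneg_mx (invmx Mx).
Proof.
apply: (minprin_inv Mx_off wM_pos); rewrite Mx_w; exact: wM_pos.
Qed.

Lemma Nx_nn : nonneg_mx Nx.
Proof.
apply: split_ind => i; apply: split_ind => j.
- rewrite /Nx block_mxEul !mxE; case: (eqVneq i j) => [<-|hij] /=.
  + by rewrite addrC -lerBlDr sub0r ?mulr1n diag_l.
  + by rewrite add0r mulr_ge0 ?(ltW l_gt0) // -aE a_off.
- have hb := b_nn i j; rewrite /Nx block_mxEur !mxE in hb *.
  by rewrite mulr_ge0 ?(ltW m_gt0).
- have hc := c_nn i j; rewrite /Nx block_mxEdl !mxE in hc *.
  by rewrite mulr_ge0 ?(ltW l_gt0).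
- rewrite /Nx block_mxEdr !mxE; case: (eqVneq i j) => [<-|hij] /=.
  + by rewrite addrC -lerBlDr sub0r ?mulr1n diag_m.
  + by rewrite add0r mulr_ge0 ?(ltW m_gt0) // -dE d_off.
Qed.

Local Notation E := (Emx T lam mu).
Local Notation G := (Gmx T lam mu).
Local Notation H := (Hmx T lam mu).
Local Notation F := (Fmx T lam mu).

Lemma EGHF_nn : nonneg_mx (EGHF T lam mu).
Proof. rewrite EGHF_E; exact: nn_mul invMx_nn Nx_nn. Qed.

Lemma EGHF_block : EGHF T lam mu = block_mx E G H F.
Proof. by rewrite /Emx /Gmx /Hmx /Fmx submxK. Qed.

Lemma E_nn : nonneg_mx E.
Proof. by move=> i j; have := EGHF_nn (lshift q i) (lshift q j); rewrite EGHF_block block_mxEul. Qed.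
Lemma G_nn : nonneg_mx G.
Proof. by move=> i j; have := EGHF_nn (lshift q i) (rshift p j); rewrite EGHF_block block_mxEur. Qed.
Lemma H_nn : nonneg_mx H.
Proof. by move=> i j; have := EGHF_nn (rshift p i) (lshift q j); rewrite EGHF_block block_mxEdl. Qed.
Lemma F_nn : nonneg_mx F.
Proof. by move=> i j; have := EGHF_nn (rshift p i) (rshift p j); rewrite EGHF_block block_mxEdr. Qed.

Lemma MEN : Mx *m EGHF T lam mu = Nx.
Proof. by rewrite EGHF_E mulKVmx // Mx_unit. Qed.

Lemma eqs :
  [/\ (1%:M - m *: a) *m E + - (l *: b) *m H = 1%:M + l *: a,
      (1%:M - m *: a) *m G + - (l *: b) *m F = m *: b,
      - (m *: c) *m E + (1%:M - l *: d) *m H = l *: c &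
      - (m *: c) *m G + (1%:M - l *: d) *m F = 1%:M + m *: d].
Proof.
have := MEN; rewrite EGHF_block /Mx /Nx mulmx_block.
by case/eq_block_mx.
Qed.

Lemma zA1 (V : zmodType) (Y x y : V) : Y = Y - x - y + (x + y).
Proof. by rewrite -[Y - x - y]addrA -opprD subrK. Qed.

Lemma zA2 (V : zmodType) (x y z : V) : x - y - z = x - (z + y).
Proof. by rewrite opprD addrA addrAC. Qed.

Lemma lm_gt0 : 0 < l + m.
Proof. by rewrite addr_gt0 // ?l_gt0 ?m_gt0. Qed.

Lemma lm_neq0 : l + m != 0.
Proof. by rewrite lt0r_neq0 // addr_gt0 // ?l_gt0 ?m_gt0. Qed.

Lemma scale_inj k n (x : R) (X Y : 'M[R]_(k, n)) : x != 0 -> x *: X = x *: Y -> X = Y.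
Proof. by move=> hx /(congr1 ( *:%R x^-1)); rewrite !scalerA mulVf // !scale1r. Qed.

Lemma Ylemma (A : 'M[R]_p) (Phi : 'M[R]_(p, q)) :
  A = A *m Phi *m H + E -> Phi = A *m Phi *m F + G ->
  exists Y1 : 'M[R]_p, [/\ Y1 *m (1%:M - m *: (a + Phi *m c)) = 1%:M,
     psi_eq T Phi & (l + m) *: Y1 = l *: 1%:M + m *: A].
Proof.
move=> hA hPhi.
pose Y := row_mx 1%:M (A *m Phi) *m invmx Mx.
have hYM : Y *m Mx = row_mx 1%:M (A *m Phi) by rewrite /Y mulmxKV // Mx_unit.
have hYN : Y *m Nx = row_mx A Phi.
  rewrite -MEN mulmxA hYM EGHF_block mul_row_block !mul1mx.
  by rewrite addrC -hA addrC -hPhi.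
move: hYM hYN; rewrite -(hsubmxK Y) /Mx /Nx !mul_row_block.
set Y1 := lsubmx Y; set Y2 := rsubmx Y.
case/eq_row_mx => y1 y2; case/eq_row_mx => y3 y4.
pose P := Y1 *m a + Y2 *m c; pose S := Y1 *m b + Y2 *m d.
have hY1 : Y1 = 1%:M + m *: P.
  by rewrite -y1 mulmxBr mulmx1 mulmxN -!scalemxAr /P scalerDr; exact: zA1.
have hA2 : A = 1%:M + (l + m) *: P.
  rewrite -y3 mulmxDr mulmx1 -!scalemxAr -addrA -scalerDr -/P {1}hY1 scalerDl.
  by rewrite -addrA [m *: P + _]addrC.
have hY2 : Y2 = Phi - m *: S.
  by rewrite -y4 mulmxDr mulmx1 -!scalemxAr addrCA -scalerDr -/S addrK.
have hAP : A *m Phi = Phi - (l + m) *: S.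
  rewrite -y2 mulmxN mulmxBr mulmx1 -!scalemxAr addrCA -opprD -scalerDr -/S hY2.
  by rewrite scalerDl zA2.
have hPS : P *m Phi = - S.
  apply: (scale_inj lm_neq0); move: hAP; rewrite hA2 mulmxDl mul1mx -scalemxAl.
  by move/addrI ->; rewrite scalerN.
have hY2' : Y2 = Y1 *m Phi.
  by rewrite hY2 {1}hY1 mulmxDl mul1mx -scalemxAl hPS scalerN.
have hi : Y1 *m (1%:M - m *: (a + Phi *m c)) = 1%:M.
  rewrite mulmxBr mulmx1 -scalemxAr mulmxDr [Y1 *m (Phi *m c)]mulmxA -hY2' -/P.
  by rewrite {1}hY1 addrK.
exists Y1; split => //.
  have hu := (mulmx1_unit hi).1.
  rewrite /psi_eq; set psi := (X in X = 0).
  suff h0 : Y1 *m psi = 0 by rewrite -(mulKmx hu psi) h0 mulmx0.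
  rewrite /psi !mulmxDr !mulmxA -hY2' -/S -addrA -mulmxDl -/P hPS.
  exact: subrr.
rewrite hY1 hA2 !scalerDr !scalerA scalerDl mulrC.
by rewrite !addrA.
Qed.

Lemma k1 (Psi : 'M[R]_(p, q)) : psi_eq T Psi -> b + Psi *m d = - ((a + Psi *m c) *m Psi).
Proof.
move=> h; apply/eqP; rewrite -addr_eq0 mulmxDl addrA.
by apply/eqP.
Qed.

Lemma RM (Psi : 'M[R]_(p, q)) : psi_eq T Psi ->
  row_mx 1%:M Psi *m Mx =
  row_mx (1%:M - m *: (a + Psi *m c)) ((1%:M + l *: (a + Psi *m c)) *m Psi).
Proof.
move=> h; rewrite /Mx mul_row_block !mul1mx; congr row_mx.
  by rewrite mulmxN -scalemxAr scalerDr opprD addrA.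
rewrite mulmxBr mulmx1 -scalemxAr addrCA -opprD -scalerDr k1 //.
by rewrite mulmxDl mul1mx -scalemxAl scalerN opprK.
Qed.

Lemma RN (Psi : 'M[R]_(p, q)) : psi_eq T Psi ->
  row_mx 1%:M Psi *m Nx =
  row_mx (1%:M + l *: (a + Psi *m c)) ((1%:M - m *: (a + Psi *m c)) *m Psi).
Proof.
move=> h; rewrite /Nx mul_row_block !mul1mx; congr row_mx.
  by rewrite -scalemxAr scalerDr addrA.
rewrite mulmxDr mulmx1 -scalemxAr addrCA -scalerDr k1 //.
by rewrite mulmxBl mul1mx -scalemxAl scalerN.
Qed.

Lemma geqs (Psi : 'M[R]_(p, q)) : psi_eq T Psi ->
  (1%:M - m *: (a + Psi *m c)) *m E + (1%:M + l *: (a + Psi *m c)) *m Psi *m H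
     = 1%:M + l *: (a + Psi *m c) /\
  (1%:M - m *: (a + Psi *m c)) *m G + (1%:M + l *: (a + Psi *m c)) *m Psi *m F
     = (1%:M - m *: (a + Psi *m c)) *m Psi.
Proof.
move=> h; have := congr1 (mulmx (row_mx 1%:M Psi)) MEN.
rewrite mulmxA RM // RN // EGHF_block mul_row_block.
by case/eq_row_mx.
Qed.

Lemma zA3 (V : zmodType) (u x y z : V) : u - (x + y) = u - (x + z) + (z - y).
Proof. by rewrite !opprD !addrA subrK. Qed.

Lemma Zk_ok (Psi Phi : 'M[R]_(p, q)) (Y1 A : 'M[R]_p) :
  nonneg_mx Psi -> le_mx Psi Phi -> nonneg_mx A ->
  Y1 *m (1%:M - m *: (a + Phi *m c)) = 1%:M ->
  (l + m) *: Y1 = l *: 1%:M + m *: A ->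
  (1%:M - m *: (a + Psi *m c)) \in unitmx /\
  nonneg_mx (invmx (1%:M - m *: (a + Psi *m c))).
Proof.
move=> hPsi hle hA hY hY1.
set Zk := 1%:M - m *: (a + Psi *m c).
pose w := Y1 *m '1_p.
have off : forall i j, i != j -> Zk i j <= 0.
  move=> i j hij; rewrite !mxE (negbTE hij) sub0r oppr_le0 mulr_ge0 ?(ltW m_gt0) //.
  rewrite addr_ge0 //; first by have := a_off hij; rewrite !mxE.
  by have := nn_mul hPsi c_nn i j; rewrite mxE.
have wpos : forall i, 0 < w i 0.
  move=> i; have := congr1 (fun M : 'M[R]_p => (M *m '1_p) i 0) hY1.
  rewrite /= -scalemxAl mulmxDl -!scalemxAl mul1mx !mxE => h.
  have hAi : 0 <= (A *m '1_p) i 0 by apply: nn_mul => // k j; rewrite mxE.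
  have : 0 < (l + m) * w i 0.
    rewrite /w mxE h mulr1; apply: (lt_le_trans l_gt0); rewrite lerDl.
    by rewrite mulr_ge0 ?(ltW m_gt0) //; move: hAi; rewrite mxE.
  by move=> h0; move: h0; rewrite /w mxE pmulr_rgt0 ?lm_gt0.
have hZw : forall i, 0 < (Zk *m w) i 0.
  have e : Zk = (1%:M - m *: (a + Phi *m c)) + m *: ((Phi - Psi) *m c).
    by rewrite /Zk mulmxBl !scalerDr scalerN (zA3 _ _ _ (m *: (Phi *m c))).
  have h1 : (1%:M - m *: (a + Phi *m c)) *m Y1 = 1%:M by exact: mulmx1C.
  move=> i; rewrite e mulmxDl /w mulmxA h1 mul1mx.
  rewrite [X in 0 < X]mxE mxE; apply: (lt_le_trans ltr01); rewrite lerDl.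
  apply: nn_mul.
    apply: nn_scale (ltW m_gt0) _; apply: nn_mul c_nn.
    by apply/le_mx_sub.
  by move=> k j; rewrite (ord1 j); exact: ltW (wpos k).
split; [exact: minprin_unit off wpos hZw | exact: minprin_inv off wpos hZw].
Qed.

Lemma entry1Z n (x : R) (X : 'M[R]_n) i j : (1%:M + x *: X) i j = (i == j)%:R + x * X i j.
Proof. by rewrite !mxE. Qed.
Lemma entry1Zm n (x : R) (X : 'M[R]_n) i j : (1%:M - x *: X) i j = (i == j)%:R - x * X i j.
Proof. by rewrite !mxE. Qed.
Lemma addE k n (X Y : 'M[R]_(k, n)) i j : (X + Y) i j = X i j + Y i j.
Proof. by rewrite !mxE. Qed.

Lemma W_nn (Psi : 'M[R]_(p, q)) : nonneg_mx Psi -> nonneg_mx (1%:M + l *: (a + Psi *m c)).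
Proof.
move=> hPsi i j; rewrite entry1Z addE; case: (eqVneq i j) => [<-|hij] /=.
  have hPc := nn_mul hPsi c_nn i i.
  have hd := diag_l (lshift q i); rewrite -aE in hd.
  rewrite mulr1n mulrDr addrA; apply: addr_ge0; last first.
    by rewrite mulr_ge0 ?(ltW l_gt0).
  by rewrite addrC -lerBlDr sub0r.
have hPc := nn_mul hPsi c_nn i j.
by rewrite add0r mulr_ge0 ?(ltW l_gt0) // addr_ge0 // a_off.
Qed.

Lemma nn_anti k n (X : 'M[R]_(k, n)) : nonneg_mx X -> nonneg_mx (- X) -> X = 0.
Proof.
move=> h1 h2; apply/matrixP => i j; have := h1 i j; have := h2 i j.
by rewrite !mxE oppr_ge0 => b1 b2; apply/eqP; rewrite eq_le b1 b2.
Qed.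

Lemma L7 (Psi : 'M[R]_(p, q)) :
  nonneg_mx Psi -> psi_eq T Psi -> le_mx (Psi *m '1_q) '1_p ->
  nonneg_mx (invmx (1%:M - m *: (a + Psi *m c))) ->
  (1%:M - m *: (a + Psi *m c)) \in unitmx ->
  forall y : 'cV[R]_p, nonneg_mx y -> le_mx y ((Psi *m H) *m y) -> y = 0.
Proof.
move=> hPsi hpsi h1 hinv hunit y hy hle.
set K := a + Psi *m c; set Zk := 1%:M - m *: K; set W := 1%:M + l *: K.
have [g1 _] := geqs hpsi; rewrite -/K -/Zk -/W in g1.
have hW : nonneg_mx W := W_nn hPsi.
have ZkE : Zk *m E = W *m (1%:M - Psi *m H).
  by rewrite mulmxBr mulmx1 mulmxA -{1}g1 addrK.
have Ey0 : E *m y = 0.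
  apply: nn_anti; first exact: nn_mul E_nn hy.
  have -> : - (E *m y) = invmx Zk *m (W *m (Psi *m H *m y - y)).
    rewrite -[E *m y](mulKmx hunit) [Zk *m (E *m y)]mulmxA ZkE -mulmxN.
    by rewrite -[W *m _ *m y]mulmxA -mulmxN mulmxBl mul1mx opprB.
  apply: nn_mul => //; apply: nn_mul => //.
  by apply/le_mx_sub.
have [_ _ e3 _] := eqs.
pose w := H *m y.
have hw : nonneg_mx w := nn_mul H_nn hy.
pose Zu := 1%:M - l *: (d + c *m Psi).
have hZuw : Zu *m w = l *: (c *m (y - Psi *m w)).
  have e3' : (- (m *: c) *m E + (1%:M - l *: d) *m H) *m y = l *: c *m y by rewrite e3.
  rewrite mulmxDl -mulmxA Ey0 mulmx0 add0r -mulmxA -/w in e3'.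
  rewrite /Zu mulmxBl -scalemxAl mulmxDl -/w.
  rewrite mulmxBl mul1mx -!scalemxAl in e3'.
  by rewrite mul1mx scalerDr opprD addrA e3' mulmxBr scalerBr -mulmxA.
have hd1 : d *m '1_q = - (c *m '1_p).
  by apply/eqP; rewrite -addr_eq0 addrC row_q.
have Zoff : forall i j, i != j -> Zu i j <= 0.
  move=> i j hij; rewrite entry1Zm addE (negbTE hij) sub0r oppr_le0.
  rewrite mulr_ge0 ?(ltW l_gt0) // addr_ge0 //; first exact: d_off.
  exact: (nn_mul c_nn hPsi i j).
have Zu1 : forall i, 0 < (Zu *m '1_q) i 0.
  move=> i.
  have -> : Zu *m '1_q = '1_q + l *: (c *m ('1_p - Psi *m '1_q)).
    rewrite /Zu mulmxBl mul1mx -scalemxAl mulmxDl hd1 -mulmxA mulmxBr scalerBr scalerDr.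
    by rewrite scalerN opprD opprK addrA.
  rewrite addE mxE; apply: (lt_le_trans ltr01); rewrite lerDl.
  apply: nn_scale (ltW l_gt0) _ i 0; apply: nn_mul c_nn _.
  by apply/le_mx_sub.
have one_pos : forall i, 0 < ('1_q : 'cV[R]_q) i 0 by move=> i; rewrite mxE.
have w0 : w = 0.
  apply: nn_anti => //; apply: (minprin Zoff one_pos Zu1).
  rewrite mulmxN hZuw -scalerN -mulmxN opprB.
  apply: nn_scale (ltW l_gt0) _; apply: nn_mul c_nn _.
  by apply/le_mx_sub; rewrite /w mulmxA.
apply: nn_anti => //.
have : le_mx y 0 by move: hle; rewrite -mulmxA -/w w0 mulmx0.
by move/le_mx_sub; rewrite sub0r.
Qed.

Definition g (X : 'M[R]_(p + q)) :=
  X *m X *m Dm1 T lam mu + X *m D0 T lam mu + D1 T lam mu.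

Lemma g_block (A : 'M[R]_p) (B : 'M[R]_(p, q)) :
  g (block_mx A B 0 0) = block_mx (B *m H + E) (A *m B *m F + A *m G) 0 0.
Proof.
rewrite /g /Dm1 /D0 /D1 !mulmx_block ?mulmx0 ?mul0mx ?addr0 ?add0r ?mulmx0 ?addr0.
by rewrite !add_block_mx ?addr0 ?add0r ?mul0mx.
Qed.

Lemma D_nn : [/\ nonneg_mx (Dm1 T lam mu), nonneg_mx (D0 T lam mu) & nonneg_mx (D1 T lam mu)].
Proof.
split; apply: nn_block; (try exact: nn0); [exact: F_nn|exact: G_nn|exact: H_nn|exact: E_nn].
Qed.

Lemma RD_block (RD : 'M[R]_(p + q)) :
  min_nonneg_sol (RD_eq T lam mu) RD ->
  RD = block_mx (ulsubmx RD) (ursubmx RD) 0 0.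
Proof.
case=> hRD hsol hmin.
have [n1 n0 n2] := D_nn.
have mono : forall Y Z, nonneg_mx Y -> le_mx Y Z -> le_mx (g Y) (g Z).
  move=> Y Z hY hYZ; have hZ := nn_le_trans hY hYZ; rewrite /g.
  apply: le_mx_add; last exact: le_mx_refl.
  apply: le_mx_add; last exact: le_mx_mulr.
  apply: le_mx_mulr => //; apply: le_mx_mul => //.
have g0 : nonneg_mx (g 0) by rewrite /g !mul0mx !add0r.
have cont : forall u L, cvgmx u L -> cvgmx (fun k => g (u k)) (g L).
  move=> u L hu; rewrite /g; apply: cvgmx_add; last first.
    exact: (cvgmx_cst (D1 T lam mu)).
  apply: cvgmx_add; last exact: (cvgmx_mul hu (cvgmx_cst (D0 T lam mu))).
  exact: (cvgmx_mul (cvgmx_mul hu hu) (cvgmx_cst (Dm1 T lam mu))).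
have [L [gL nL LRD cvL]] := iter_fix mono g0 hRD hsol cont.
have RDL : RD = L.
  apply: le_mx_anti => //; exact: hmin.
have inv : forall k, iter k g 0 = block_mx (ulsubmx (iter k g 0)) (ursubmx (iter k g 0)) 0 0.
  elim=> [|k IH] /=.
    apply/matrixP; apply: split_indg => i; apply: split_indg => j;
    by rewrite ?block_mxEul ?block_mxEur ?block_mxEdl ?block_mxEdr !mxE.
  by rewrite IH g_block block_mxKul block_mxKur.
have z : forall i j, L (rshift p i) j = 0.
  move=> i j; have h := cvL (rshift p i) j.
  have e : (fun k => iter k g 0 (rshift p i) j) = (fun _ => 0).
    apply: funext => k; rewrite inv; move: j {h}; apply: split_indg => j.
      by rewrite block_mxEdl mxE.
    by rewrite block_mxEdr mxE.
  rewrite e in h; exact: (cvg_unique _ h (cvg_cst 0)).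
rewrite -{1}(submxK RD); congr block_mx.
  by apply/matrixP => i j; rewrite !mxE RDL z.
by apply/matrixP => i j; rewrite !mxE RDL z.
Qed.

Lemma h1z (V : zmodType) (u x v o : V) : u + (x - v) + (o - u) + v = o + x.
Proof. by rewrite (addrAC u) [u + (o - u)]addrC subrK -addrA subrK. Qed.
Lemma rearr (V : zmodType) (X u1 u2 u3 u4 : V) :
  u1 + (X + u2) + (X + u3) + u4 = (X + X) + (u1 + u2 + u3 + u4).
Proof. by rewrite [u1 + (X + u2)]addrCA [X + _ + (X + u3)]addrACA [RHS]addrA. Qed.

Lemma le_mx_scale k n (x : R) (A B : 'M[R]_(k, n)) : 0 <= x -> le_mx A B -> le_mx (x *: A) (x *: B).
Proof. by move=> hx h i j; rewrite !mxE ler_wpM2l. Qed.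

Lemma onepZ_nn k (X : 'M[R]_k) x : 0 <= x -> (forall i, -1 <= x * X i i) ->
  (forall i j, i != j -> 0 <= X i j) -> nonneg_mx (1%:M + x *: X).
Proof.
move=> hx hd ho i j; rewrite entry1Z; case: (eqVneq i j) => [<-|hij] /=.
  by rewrite mulr1n addrC -lerBlDr sub0r.
by rewrite add0r mulr_ge0 // ho.
Qed.

Definition fmap (X : 'M[R]_(p, q)) :=
  2^-1 *: (m *: b + X *m (1%:M + m *: d) + (1%:M + m *: a) *m X + m *: (X *m c *m X)).

Lemma two_neq0 : (2%:R : R) != 0.
Proof. by rewrite pnatr_eq0. Qed.

Lemma fmap_E X : fmap X = X + (2^-1 * m) *: (b + X *m d + a *m X + X *m c *m X).
Proof.
rewrite /fmap mulmxDr mulmx1 mulmxDl mul1mx -!scalemxAr -!scalemxAl rearr scalerDr.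
rewrite -scalerA !scalerDr; congr (_ + _).
by rewrite -mulr2n -scaler_nat scalerA mulfV ?two_neq0 // scale1r.
Qed.

Lemma Psi_row (Psi : 'M[R]_(p, q)) : min_nonneg_sol (psi_eq T) Psi -> le_mx (Psi *m '1_q) '1_p.
Proof.
case=> hP hsol hmin.
have s0 : 2^-1 * m != 0 by rewrite mulf_neq0 // ?invr_eq0 ?two_neq0 // lt0r_neq0 // m_gt0.
have fpsi : forall X, fmap X = X <-> psi_eq T X.
  move=> X; rewrite fmap_E /psi_eq; split.
    move/(congr1 (fun Y => Y - X)); rewrite /= addrC addKr subrr => /eqP.
    by rewrite scaler_eq0 (negbTE s0) /= => /eqP.
  by move=> ->; rewrite scaler0 addr0.
have cA : nonneg_mx (1%:M + m *: a).
  apply: onepZ_nn (ltW m_gt0) _ _ => [i|i j hij]; first by rewrite aE diag_m.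
  exact: a_off.
have cD : nonneg_mx (1%:M + m *: d).
  apply: onepZ_nn (ltW m_gt0) _ _ => [i|i j hij]; first by rewrite dE diag_m.
  exact: d_off.
have cB : nonneg_mx (m *: b) by apply: nn_scale (ltW m_gt0) b_nn.
have half0 : 0 <= (2^-1 : R) by rewrite invr_ge0 ler0n.
have mono : forall Y Z, nonneg_mx Y -> le_mx Y Z -> le_mx (fmap Y) (fmap Z).
  move=> Y Z hY hYZ; have hZ := nn_le_trans hY hYZ; rewrite /fmap.
  apply: le_mx_scale => //.
  apply: le_mx_add; last first.
    apply: le_mx_scale; first exact: ltW m_gt0.
    by apply: le_mx_mul => //; [exact: nn_mul hY c_nn | exact: le_mx_mulr hYZ c_nn].
  apply: le_mx_add; last exact: le_mx_mull.
  apply: le_mx_add; first exact: le_mx_refl.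
  exact: le_mx_mulr.
have f0 : nonneg_mx (fmap 0).
  rewrite /fmap !mul0mx mulmx0 !scaler0 !addr0; exact: nn_scale half0 cB.
have cont : forall u L, cvgmx u L -> cvgmx (fun k => fmap (u k)) (fmap L).
  move=> u L hu; rewrite /fmap; apply: cvgmx_scale.
  apply: cvgmx_add; last apply: cvgmx_scale; last first.
    exact: (cvgmx_mul (cvgmx_mul hu (cvgmx_cst c)) hu).
  apply: cvgmx_add; last exact: (cvgmx_mul (cvgmx_cst (1%:M + m *: a)) hu).
  apply: cvgmx_add; first exact: (cvgmx_cst (m *: b)).
  exact: (cvgmx_mul hu (cvgmx_cst (1%:M + m *: d))).
have hfP : fmap Psi = Psi by apply/fpsi.
have [L [fL nL LP cvL]] := iter_fix mono f0 hP hfP cont.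
have PL : Psi = L by apply: le_mx_anti => //; apply: hmin => //; apply/fpsi.
have ha1 : a *m '1_p = - (b *m '1_q) by apply/eqP; rewrite -addr_eq0 row_p.
have hd1 : d *m '1_q = - (c *m '1_p) by apply/eqP; rewrite -addr_eq0 addrC row_q.
have inv : forall k, nonneg_mx (iter k fmap 0) /\ le_mx (iter k fmap 0 *m '1_q) '1_p.
  elim=> [|k [IH1 IH2]] /=.
    split; first exact: nn0.
    by move=> i j; rewrite mul0mx !mxE.
  set X := iter k fmap 0.
  split.
    apply: nn_le_trans f0 _; apply: mono; [exact: nn0|exact/nn_le0].
  have one0 : nonneg_mx ('1_q : 'cV[R]_q) by move=> i j; rewrite mxE.
  have one0p : nonneg_mx ('1_p : 'cV[R]_p) by move=> i j; rewrite mxE.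
  apply: (le_mx_trans (B := 2^-1 *: ('1_p + X *m '1_q))).
    rewrite /fmap -scalemxAl; apply: le_mx_scale => //.
    rewrite !mulmxDl -!mulmxA -!scalemxAl.
    have -> : '1_p + X *m '1_q = m *: (b *m '1_q) + X *m ((1%:M + m *: d) *m '1_q)
        + (1%:M + m *: a) *m '1_p + m *: (X *m (c *m '1_p)).
      rewrite !mulmxDl !mul1mx -!scalemxAl hd1 ha1 mulmxDr -!scalemxAr mulmxN !scalerN.
      by rewrite h1z.
    apply: le_mx_add; last first.
      apply: le_mx_scale; first exact: ltW m_gt0.
      rewrite -!mulmxA; apply: le_mx_mull IH1 _; exact: le_mx_mull c_nn IH2.
    apply: le_mx_add; first exact: le_mx_refl.
    rewrite scalemxAl -mulmxDl; exact: le_mx_mull cA IH2.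
  move=> i j; rewrite !mxE; have := IH2 i j; rewrite !mxE => h.
  rewrite -[X in _ <= X](mulVf two_neq0) ler_wpM2l // mulr2n lerD2l //.
have cv1 : cvgmx (fun k => iter k fmap 0 *m '1_q) (Psi *m '1_q).
  rewrite PL; exact: (cvgmx_mul cvL (cvgmx_cst '1_q)).
move=> i j; apply: (ler_cvg_to (cv1 i j) (cvg_cst _)); apply: nearW => k.
by case: (inv k) => _ h; exact: h.
Qed.

Lemma main (Psi : 'M[R]_(p, q)) (RD : 'M[R]_(p + q)) :
  min_nonneg_sol (psi_eq T) Psi -> min_nonneg_sol (RD_eq T lam mu) RD ->
  [/\ (1%:M - Psi *m H) \in unitmx,
      (1%:M - m *: (a + Psi *m c)) \in unitmx,
      E *m invmx (1%:M - Psi *m H) =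
        invmx (1%:M - m *: (a + Psi *m c)) *m (1%:M + l *: (a + Psi *m c))
    & RD = block_mx (E *m invmx (1%:M - Psi *m H))
                    (E *m invmx (1%:M - Psi *m H) *m Psi) 0 0].
Proof.
move=> hPsi hRD.
have hRDb := RD_block hRD.
have Prow := Psi_row hPsi.
case: hPsi => [Pnn Psol Pmin]; case: (hRD) => [RDnn RDsol RDmin].
set A := ulsubmx RD; set B := ursubmx RD.
have hg : g (block_mx A B 0 0) = block_mx A B 0 0 by rewrite -hRDb.
rewrite g_block in hg; case/eq_block_mx: hg => eA eB _ _.
have Ann : nonneg_mx A by move=> i j; have := RDnn (lshift q i) (lshift q j); rewrite hRDb block_mxEul.
have Bnn : nonneg_mx B by move=> i j; have := RDnn (lshift q i) (rshift p j); rewrite hRDb block_mxEur.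
pose Phi := B *m F + G.
have hBA : B = A *m Phi by rewrite -{1}eB /Phi mulmxDr mulmxA.
have hA' : A = A *m Phi *m H + E by rewrite -hBA eA.
have hPhi : Phi = A *m Phi *m F + G by rewrite -hBA.
have [Y1 [hY psiPhi hY1]] := Ylemma hA' hPhi.
have Phinn : nonneg_mx Phi by apply: nn_add; [exact: nn_mul Bnn F_nn | exact: G_nn].
have PsiPhi : le_mx Psi Phi := Pmin Phi Phinn psiPhi.
have [Zu Zinv] := Zk_ok Pnn PsiPhi Ann hY hY1.
set K := a + Psi *m c.
rewrite -/K in Zu Zinv.
set Zk := 1%:M - m *: K in Zu Zinv *.
set W := 1%:M + l *: K.
pose R1' := invmx Zk *m W.
have [g1 g2] := geqs Psol; rewrite -/K -/Zk -/W in g1 g2.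
have R1'E : R1' = R1' *m Psi *m H + E.
  have : invmx Zk *m (Zk *m E + W *m Psi *m H) = invmx Zk *m W by rewrite g1.
  by rewrite mulmxDr mulKmx // !mulmxA -/R1' addrC => /esym.
have R1'G : Psi = R1' *m Psi *m F + G.
  have : invmx Zk *m (Zk *m G + W *m Psi *m F) = invmx Zk *m (Zk *m Psi) by rewrite g2.
  by rewrite mulmxDr !mulKmx // !mulmxA -/R1' addrC => /esym.
have R1'nn : nonneg_mx R1' := nn_mul Zinv (W_nn Pnn).
have X'sol : g (block_mx R1' (R1' *m Psi) 0 0) = block_mx R1' (R1' *m Psi) 0 0.
  rewrite g_block -R1'E; congr block_mx.
  by rewrite -mulmxA -mulmxDr -R1'G.
have X'nn : nonneg_mx (block_mx R1' (R1' *m Psi) 0 0 : 'M[R]_(p + q)).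
  exact: (nn_block R1'nn (nn_mul R1'nn Pnn) (@nn0 _ q p) (@nn0 _ q q)).
have RDX := RDmin _ X'nn X'sol.
have hB : le_mx B (R1' *m Psi).
  by move=> i j; have := RDX (lshift q i) (rshift p j); rewrite {1}hRDb !block_mxEur.
have PhiPsi : le_mx Phi Psi.
  rewrite [X in le_mx _ X]R1'G; apply: le_mx_add; last exact: le_mx_refl.
  exact: le_mx_mulr hB F_nn.
have ePhi : Phi = Psi by apply: le_mx_anti.
rewrite ePhi -/K -/Zk in hY.
have Y1E : invmx Zk = Y1.
  have h := mulmx1C hY; by rewrite -[Y1](mulKmx Zu) h mulmx1.
have hYK : m *: (Y1 *m K) = Y1 - 1%:M.
  move: hY; rewrite mulmxBr mulmx1 -scalemxAr => hY'.
  by rewrite -hY' opprB addrC subrK.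
have eAR : A = R1'.
  apply: (scale_inj (lt0r_neq0 m_gt0)).
  rewrite /R1' Y1E mulmxDr mulmx1 -scalemxAr scalerDr scalerA mulrC -scalerA hYK.
  have mA : m *: A = (l + m) *: Y1 - l *: 1%:M by rewrite hY1 [l *: _ + _]addrC addrK.
  by rewrite mA scalerDl scalerBr [l *: Y1 + _]addrC addrA.
have eBR : B = R1' *m Psi by rewrite hBA ePhi eAR.
have HU : (1%:M - Psi *m H) \in unitmx.
  apply: unit_L7; first exact: nn_mul Pnn H_nn.
  exact: L7 Pnn Psol Prow Zinv Zu.
have eR1 : E *m invmx (1%:M - Psi *m H) = R1'.
  have -> : E = R1' *m (1%:M - Psi *m H).
    by rewrite mulmxBr mulmx1 mulmxA {1}R1'E addrAC subrr add0r.
  exact: (mulmxK HU).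
split => //.
by rewrite eR1 {1}hRDb -/A -/B eAR eBR.
Qed.

End Main.

Unset Implicit Arguments.
Local Close Scope classical_set_scope.

Theorem theorem7 (R : realType) (p q : nat) (T : 'M[R]_(p + q)) (lam mu : R)
    (Psi : 'M[R]_(p, q)) (RD : 'M[R]_(p + q)) :
  (0 < p)%N -> (0 < q)%N ->
  generator T ->
  0 < lam -> 0 < mu ->
  (forall i, `|T i i| <= lam) -> (forall i, `|T i i| <= mu) ->
  min_nonneg_sol (psi_eq T) Psi ->
  min_nonneg_sol (RD_eq T lam mu) RD ->
  let K := Tpp T + Psi *m Tmp T in
  let R1 := Emx T lam mu *m invmx (1%:M - Psi *m Hmx T lam mu) in
  [/\ (1%:M - Psi *m Hmx T lam mu) \in unitmx,
      (1%:M - mu^-1 *: K) \in unitmx,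
      R1 = invmx (1%:M - mu^-1 *: K) *m (1%:M + lam^-1 *: K)
    & RD = block_mx R1 (R1 *m Psi) 0 0].
Proof.
move=> _ _ hgen hlam hmu hdl hdm hPsi hRD K R1.
exact: (main hgen hlam hmu hdl hdm hPsi hRD).
Qed.
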